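(* Let $X$ be a matrix ordered operator space and let $J\subseteq X$ be a kernel. Then $X/J$, with the quotient operator space structure, involution $(x+J)^*=x^*+J$ and cones $M_n(X/J)^+=\overline{\{x+M_n(J):x\in M_n(X)^+\}}$, is a matrix ordered operator space.
   Context: A matrix ordered operator space is an operator space $X$ with a conjugate-linear completely isometric involution and, for each $n$, a norm-closed cone $M_n(X)^+\subseteq M_n(X)^{sa}$ such that the family is closed under $x\mapsto\alpha^*x\alpha$ for scalar matrices $\alpha$ and under direct sums (a matrix convex cone), and $M_n(X)^+\cap(-M_n(X)^+)=\{0\}$ for all $n$. A closed subspace $J\subseteq X$ is a kernel if $J=\ker\phi$ for some completely contractive completely positive map $\phi:X\to Y$ into a matrix ordered operator space $Y$. The quotient operator space structure identifies $M_n(X/J)$ isometrically with $M_n(X)/M_n(J)$, and the closure in the claim is in this quotient norm. *)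

(* Defs.v *)
From mathcomp Require Import all_boot all_order all_algebra.
From mathcomp Require Import complex.
From mathcomp Require Import all_classical all_reals.

Set Implicit Arguments.
Unset Strict Implicit.
Unset Printing Implicit Defensive.

Import Order.TTheory GRing.Theory Num.Theory.
Local Open Scope ring_scope.
Local Open Scope classical_set_scope.

Section MOOS.
Variable R : realType.
Local Notation C := (R[i]).

Definition cabs (z : C) : R := Num.sqrt (complex.Re z ^+ 2 + complex.Im z ^+ 2).
Definition vnorm2 n (v : 'cV[C]_n) : R :=
  \sum_(i < n) (complex.Re (v i 0) ^+ 2 + complex.Im (v i 0) ^+ 2).

Definition opbound m n (a : 'M[C]_(m, n)) (c : R) : Prop :=
  0 <= c /\ forall v : 'cV[C]_n, vnorm2 (a *m v) <= c ^+ 2 * vnorm2 v.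

Definition adjmx m n (a : 'M[C]_(m, n)) : 'M[C]_(n, m) := map_mx conjc a^T.

Section Space.
Variable X : lmodType C.

Definition lsmul m n p (a : 'M[C]_(m, n)) (x : 'M[X]_(n, p)) : 'M[X]_(m, p) :=
  \matrix_(i, j) \sum_(k < n) a i k *: x k j.
Definition rsmul m n p (x : 'M[X]_(m, n)) (b : 'M[C]_(n, p)) : 'M[X]_(m, p) :=
  \matrix_(i, j) \sum_(k < n) b k j *: x i k.

Definition mxstar (star : X -> X) n (x : 'M[X]_n) : 'M[X]_n :=
  \matrix_(i, j) star (x j i).

Definition dsum n m (x : 'M[X]_n) (y : 'M[X]_m) : 'M[X]_(n + m) :=
  block_mx x 0 0 y.

Definition mxin (J : set X) n : set 'M[X]_n := [set x | forall i j, J (x i j)].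

Definition nclosure n (N : 'M[X]_n -> R) (S : set 'M[X]_n) : set 'M[X]_n :=
  [set x | forall e : R, 0 < e -> exists2 y, S y & N (x - y) < e].

Definition is_operator_space (N : forall n, 'M[X]_n -> R) : Prop :=
  [/\ (forall n (x y : 'M[X]_n), N n (x + y) <= N n x + N n y),
      (forall n (l : C) (x : 'M[X]_n), N n (map_mx ( *:%R l) x) = cabs l * N n x),
      (forall n (x : 'M[X]_n), N n x = 0 -> x = 0),
      (forall n m (x : 'M[X]_n) (y : 'M[X]_m),
          N (n + m)%N (dsum x y) = Num.max (N n x) (N m y)) &
      (forall n (a b : 'M[C]_n) (x : 'M[X]_n) (ca cb : R),
          opbound a ca -> opbound b cb ->
          N n (rsmul (lsmul a x) b) <= ca * N n x * cb)].

Definition is_cci_involution (N : forall n, 'M[X]_n -> R) (star : X -> X) : Prop :=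
  [/\ (forall x, star (star x) = x),
      (forall x y, star (x + y) = star x + star y),
      (forall (l : C) x, star (l *: x) = conjc l *: star x) &
      (forall n (x : 'M[X]_n), N n (mxstar star x) = N n x)].

Definition is_matrix_ordering (N : forall n, 'M[X]_n -> R) (star : X -> X)
    (P : forall n, set 'M[X]_n) : Prop :=
  [/\ (forall n (x : 'M[X]_n), P n x -> mxstar star x = x),
      (forall n, nclosure (N n) (P n) `<=` P n),
      (forall n m (a : 'M[C]_(n, m)) (x : 'M[X]_n),
          P n x -> P m (rsmul (lsmul (adjmx a) x) a)),
      (forall n m (x : 'M[X]_n) (y : 'M[X]_m), P n x -> P m y -> P (n + m)%N (dsum x y)) &
      (forall n (x : 'M[X]_n), P n x -> P n (- x) -> x = 0)].

Definition is_moos (N : forall n, 'M[X]_n -> R) (star : X -> X)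
    (P : forall n, set 'M[X]_n) : Prop :=
  [/\ is_operator_space N, is_cci_involution N star & is_matrix_ordering N star P].

End Space.

(* J is a kernel of the matrix ordered operator space (X, N, star, P):
   J = ker phi for a completely contractive, completely positive
   (self-adjoint, i.e. *-preserving) linear map phi into a matrix ordered
   operator space Y. *)
Definition is_kernel (X : lmodType C) (N : forall n, 'M[X]_n -> R) (star : X -> X)
    (P : forall n, set 'M[X]_n) (J : set X) : Prop :=
  exists (Y : lmodType C) (NY : forall n, 'M[Y]_n -> R) (starY : Y -> Y)
         (PY : forall n, set 'M[Y]_n) (phi : {linear X -> Y}),
    [/\ is_moos NY starY PY,
        (forall x, phi (star x) = starY (phi x)),
        (forall n (x : 'M[X]_n), NY n (map_mx phi x) <= N n x),
        (forall n (x : 'M[X]_n), P n x -> PY n (map_mx phi x)) &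
        J = [set x | phi x = 0]].


End MOOS.
Arguments mxin {R X} J n.

(* Main.v *)
From HB Require Import structures.
Require Import Defs.
From mathcomp Require Import all_boot all_order all_algebra.
From mathcomp Require Import complex.
From mathcomp Require Import all_classical all_reals.
From mathcomp Require Import ring lra.
Set Implicit Arguments.
Unset Strict Implicit.
Unset Printing Implicit Defensive.
Import Order.TTheory GRing.Theory Num.Theory.
Local Open Scope ring_scope.
Local Open Scope classical_set_scope.
Section Mx.
Variables (R : realType) (V : lmodType R[i]).
Local Notation C := R[i].

Lemma lsmulDl m n p (a b : 'M[C]_(m, n)) (x : 'M[V]_(n, p)) :
  lsmul (a + b) x = lsmul a x + lsmul b x.
Proof.
by apply/matrixP=> i j; rewrite !mxE -big_split; apply: eq_bigr => k _; rewrite !mxE scalerDl.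
Qed.
Lemma lsmul0l m n p (x : 'M[V]_(n, p)) : lsmul (0 : 'M[C]_(m, n)) x = 0.
Proof. by apply/matrixP=> i j; rewrite !mxE big1 // => k _; rewrite mxE scale0r. Qed.
Lemma lsmulZl m n p c (a : 'M[C]_(m, n)) (x : 'M[V]_(n, p)) :
  lsmul (c *: a) x = map_mx ( *:%R c) (lsmul a x).
Proof.
apply/matrixP=> i j; rewrite !mxE scaler_sumr; apply: eq_bigr => k _.
by rewrite !mxE scalerA.
Qed.
Lemma lsmulDr m n p (a : 'M[C]_(m, n)) (x y : 'M[V]_(n, p)) :
  lsmul a (x + y) = lsmul a x + lsmul a y.
Proof.
by apply/matrixP=> i j; rewrite !mxE -big_split; apply: eq_bigr => k _; rewrite !mxE scalerDr.
Qed.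
Lemma lsmul0r m n p (a : 'M[C]_(m, n)) : lsmul a (0 : 'M[V]_(n, p)) = 0.
Proof. by apply/matrixP=> i j; rewrite !mxE big1 // => k _; rewrite mxE scaler0. Qed.
Lemma lsmulNr m n p (a : 'M[C]_(m, n)) (x : 'M[V]_(n, p)) :
  lsmul a (- x) = - lsmul a x.
Proof.
by apply/matrixP=> i j; rewrite !mxE -sumrN; apply: eq_bigr => k _; rewrite !mxE scalerN.
Qed.
Lemma lsmulZr m n p c (a : 'M[C]_(m, n)) (x : 'M[V]_(n, p)) :
  lsmul a (map_mx ( *:%R c) x) = map_mx ( *:%R c) (lsmul a x).
Proof.
apply/matrixP=> i j; rewrite !mxE scaler_sumr; apply: eq_bigr => k _.
by rewrite !mxE !scalerA mulrC.
Qed.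
Lemma lsmul1 n p (x : 'M[V]_(n, p)) : lsmul 1%:M x = x.
Proof.
apply/matrixP=> i j; rewrite !mxE (bigD1 i) //= big1 ?addr0.
  by rewrite !mxE eqxx scale1r.
by move=> k /negbTE ki; rewrite !mxE eq_sym ki scale0r.
Qed.

Lemma rsmulDl m n p (x y : 'M[V]_(m, n)) (b : 'M[C]_(n, p)) :
  rsmul (x + y) b = rsmul x b + rsmul y b.
Proof.
by apply/matrixP=> i j; rewrite !mxE -big_split; apply: eq_bigr => k _; rewrite !mxE scalerDr.
Qed.
Lemma rsmul0l m n p (b : 'M[C]_(n, p)) : rsmul (0 : 'M[V]_(m, n)) b = 0.
Proof. by apply/matrixP=> i j; rewrite !mxE big1 // => k _; rewrite mxE scaler0. Qed.
Lemma rsmulNl m n p (x : 'M[V]_(m, n)) (b : 'M[C]_(n, p)) :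
  rsmul (- x) b = - rsmul x b.
Proof.
by apply/matrixP=> i j; rewrite !mxE -sumrN; apply: eq_bigr => k _; rewrite !mxE scalerN.
Qed.
Lemma rsmulZl m n p c (x : 'M[V]_(m, n)) (b : 'M[C]_(n, p)) :
  rsmul (map_mx ( *:%R c) x) b = map_mx ( *:%R c) (rsmul x b).
Proof.
apply/matrixP=> i j; rewrite !mxE scaler_sumr; apply: eq_bigr => k _.
by rewrite !mxE !scalerA mulrC.
Qed.
Lemma rsmulDr m n p (x : 'M[V]_(m, n)) (a b : 'M[C]_(n, p)) :
  rsmul x (a + b) = rsmul x a + rsmul x b.
Proof.
by apply/matrixP=> i j; rewrite !mxE -big_split; apply: eq_bigr => k _; rewrite !mxE scalerDl.
Qed.
Lemma rsmul0r m n p (x : 'M[V]_(m, n)) : rsmul x (0 : 'M[C]_(n, p)) = 0.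
Proof. by apply/matrixP=> i j; rewrite !mxE big1 // => k _; rewrite mxE scale0r. Qed.
Lemma rsmulZr m n p c (x : 'M[V]_(m, n)) (b : 'M[C]_(n, p)) :
  rsmul x (c *: b) = map_mx ( *:%R c) (rsmul x b).
Proof.
apply/matrixP=> i j; rewrite !mxE scaler_sumr; apply: eq_bigr => k _.
by rewrite !mxE scalerA.
Qed.
Lemma rsmul1 m n (x : 'M[V]_(m, n)) : rsmul x 1%:M = x.
Proof.
apply/matrixP=> i j; rewrite !mxE (bigD1 j) //= big1 ?addr0.
  by rewrite !mxE eqxx scale1r.
by move=> k /negbTE kj; rewrite !mxE kj scale0r.
Qed.

Lemma lsmul_block m1 m2 n1 n2 p1 p2
  (a11 : 'M[C]_(m1, n1)) (a12 : 'M[C]_(m1, n2)) (a21 : 'M[C]_(m2, n1)) (a22 : 'M[C]_(m2, n2))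
  (x11 : 'M[V]_(n1, p1)) (x12 : 'M[V]_(n1, p2)) (x21 : 'M[V]_(n2, p1)) (x22 : 'M[V]_(n2, p2)) :
  lsmul (block_mx a11 a12 a21 a22) (block_mx x11 x12 x21 x22) =
  block_mx (lsmul a11 x11 + lsmul a12 x21) (lsmul a11 x12 + lsmul a12 x22)
           (lsmul a21 x11 + lsmul a22 x21) (lsmul a21 x12 + lsmul a22 x22).
Proof.
apply/matrixP=> i j; rewrite -(@splitK _ _ i) -(@splitK _ _ j).
case: (fintype.split i) => k; case: (fintype.split j) => l;
rewrite /= ?block_mxEul ?block_mxEur ?block_mxEdl ?block_mxEdr !mxE big_split_ord /=;
by congr (_ + _); apply: eq_bigr => r _;
  rewrite ?block_mxEul ?block_mxEur ?block_mxEdl ?block_mxEdr.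
Qed.

Lemma rsmul_block m1 m2 n1 n2 p1 p2
  (x11 : 'M[V]_(m1, n1)) (x12 : 'M[V]_(m1, n2)) (x21 : 'M[V]_(m2, n1)) (x22 : 'M[V]_(m2, n2))
  (b11 : 'M[C]_(n1, p1)) (b12 : 'M[C]_(n1, p2)) (b21 : 'M[C]_(n2, p1)) (b22 : 'M[C]_(n2, p2)) :
  rsmul (block_mx x11 x12 x21 x22) (block_mx b11 b12 b21 b22) =
  block_mx (rsmul x11 b11 + rsmul x12 b21) (rsmul x11 b12 + rsmul x12 b22)
           (rsmul x21 b11 + rsmul x22 b21) (rsmul x21 b12 + rsmul x22 b22).
Proof.
apply/matrixP=> i j; rewrite -(@splitK _ _ i) -(@splitK _ _ j).
case: (fintype.split i) => k; case: (fintype.split j) => l;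
rewrite /= ?block_mxEul ?block_mxEur ?block_mxEdl ?block_mxEdr !mxE big_split_ord /=;
by congr (_ + _); apply: eq_bigr => r _;
  rewrite ?block_mxEul ?block_mxEur ?block_mxEdl ?block_mxEdr.
Qed.

Lemma map_lsmul (W : lmodType C) (f : {linear V -> W}) m n p (a : 'M[C]_(m, n)) (x : 'M[V]_(n, p)) :
  map_mx f (lsmul a x) = lsmul a (map_mx f x).
Proof.
apply/matrixP=> i j; rewrite !mxE linear_sum; apply: eq_bigr => k _.
by rewrite linearZ !mxE.
Qed.
Lemma map_rsmul (W : lmodType C) (f : {linear V -> W}) m n p (x : 'M[V]_(m, n)) (b : 'M[C]_(n, p)) :
  map_mx f (rsmul x b) = rsmul (map_mx f x) b.
Proof.
apply/matrixP=> i j; rewrite !mxE linear_sum; apply: eq_bigr => k _.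
by rewrite linearZ !mxE.
Qed.
End Mx.


Section Cabs.
Variable R : realType.
Lemma cabsE (z : R[i]) : cabs z = Normc.normc z.
Proof. by case: z. Qed.
Lemma cabs_ge0 (z : R[i]) : 0 <= cabs z.
Proof. exact: sqrtr_ge0. Qed.
Lemma cabsM (a b : R[i]) : cabs (a * b) = cabs a * cabs b.
Proof. by rewrite !cabsE Normc.normcM. Qed.
Lemma cabs0 : cabs (0 : R[i]) = 0.
Proof. by rewrite cabsE Normc.normc0. Qed.
Lemma cabs1 : cabs (1 : R[i]) = 1.
Proof. by rewrite cabsE Normc.normc1. Qed.
Lemma cabsN1 : cabs (-1 : R[i]) = 1.
Proof. by rewrite /cabs /= oppr0 expr0n /= addr0 sqrrN expr1n sqrtr1. Qed.
Lemma cabsV (a : R[i]) : cabs a^-1 = (cabs a)^-1.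
Proof. by rewrite !cabsE Normc.normcV. Qed.
End Cabs.

Section OS.
Variables (R : realType) (V : lmodType R[i]).
Local Notation C := R[i].
Variable NV : forall n, 'M[V]_n -> R.
Hypothesis HV : is_operator_space NV.

Lemma NVD n (x y : 'M[V]_n) : NV (x + y) <= NV x + NV y.
Proof. by case: HV. Qed.
Lemma NVZ n c (x : 'M[V]_n) : NV (map_mx ( *:%R c) x) = cabs c * NV x.
Proof. by case: HV. Qed.
Lemma NV_eq0 n (x : 'M[V]_n) : NV x = 0 -> x = 0.
Proof. by case: HV => _ _ H _ _; exact: H. Qed.
Lemma NV_dsum n m (x : 'M[V]_n) (y : 'M[V]_m) :
  NV (dsum x y) = Num.max (NV x) (NV y).
Proof. by case: HV. Qed.
Lemma NV_ab n (a b : 'M[C]_n) (x : 'M[V]_n) ca cb :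
  opbound a ca -> opbound b cb -> NV (rsmul (lsmul a x) b) <= ca * NV x * cb.
Proof. by case: HV => _ _ _ _ H; exact: H. Qed.

Lemma map_scale0 m n (x : 'M[V]_(m, n)) : map_mx ( *:%R (0 : C)) x = 0.
Proof. by apply/matrixP => i j; rewrite !mxE scale0r. Qed.
Lemma map_scaleN1 m n (x : 'M[V]_(m, n)) : map_mx ( *:%R (-1 : C)) x = - x.
Proof. by apply/matrixP => i j; rewrite !mxE scaleN1r. Qed.

Lemma NV0 n : NV (0 : 'M[V]_n) = 0.
Proof. by rewrite -(map_scale0 0) NVZ cabs0 mul0r. Qed.
Lemma NVN n (x : 'M[V]_n) : NV (- x) = NV x.
Proof. by rewrite -map_scaleN1 NVZ cabsN1 mul1r. Qed.
Lemma NV_ge0 n (x : 'M[V]_n) : 0 <= NV x.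
Proof.
have := NVD x (- x); rewrite subrr NV0 NVN => h.
by rewrite -(pmulr_rge0 _ (ltr0n R 2)) mulr2n mulrDl mul1r.
Qed.
Lemma NVB n (x y : 'M[V]_n) : NV (x - y) = NV (y - x).
Proof. by rewrite -NVN opprB. Qed.

Lemma NV_sum n I (r : seq I) (Pr : pred I) (F : I -> 'M[V]_n) :
  NV (\sum_(i <- r | Pr i) F i) <= \sum_(i <- r | Pr i) NV (F i).
Proof.
elim/big_rec2: _ => [|i y1 y2 _ h]; first by rewrite NV0.
by apply: (le_trans (NVD _ _)); rewrite lerD2l.
Qed.

Lemma NV_dsum0 n m (x : 'M[V]_n) : NV (dsum x (0 : 'M[V]_m)) = NV x.
Proof. by rewrite NV_dsum NV0 max_l // NV_ge0. Qed.
Lemma NV_dsum0l n m (x : 'M[V]_n) : NV (dsum (0 : 'M[V]_m) x) = NV x.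
Proof. by rewrite NV_dsum NV0 max_r // NV_ge0. Qed.
End OS.

Section Bound.
Variables (R : realType) (V : lmodType R[i]).
Local Notation C := R[i].

Lemma vnorm2_ge0 n (v : 'cV[C]_n) : 0 <= vnorm2 v.
Proof. by apply: sumr_ge0 => i _; rewrite addr_ge0 // sqr_ge0. Qed.

Lemma opbound_delta n (i j : 'I_n) : opbound (delta_mx i j : 'M[C]_n) 1.
Proof.
split => // v; rewrite expr1n mul1r /vnorm2.
rewrite (bigD1 i) //= big1 ?addr0; last first.
  move=> r /negbTE ri; rewrite !mxE big1 ?expr0n ?addr0 //= => k _.
  by rewrite !mxE ri mul0r.
have -> : (delta_mx i j *m v) i 0 = v j 0.
  rewrite !mxE (bigD1 j) //= big1 ?addr0; first by rewrite !mxE !eqxx mul1r.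
  by move=> k /negbTE kj; rewrite !mxE eqxx kj mul0r.
rewrite [X in _ <= X](bigD1 j) //= lerDl.
by apply: sumr_ge0 => k _; rewrite addr_ge0 // sqr_ge0.
Qed.

Definition Kmx m n (a : 'M[C]_(m, n)) : R := \sum_(i < m) \sum_(j < n) cabs (a i j).
Lemma Kmx_ge0 m n (a : 'M[C]_(m, n)) : 0 <= Kmx a.
Proof. by apply: sumr_ge0 => i _; apply: sumr_ge0 => j _; exact: cabs_ge0. Qed.

Lemma lsmul_suml m n p I (r : seq I) (Pr : pred I) (F : I -> 'M[C]_(m, n)) (x : 'M[V]_(n, p)) :
  lsmul (\sum_(i <- r | Pr i) F i) x = \sum_(i <- r | Pr i) lsmul (F i) x.
Proof. exact: (big_morph (fun a => lsmul a x) (fun a b => lsmulDl a b x) (lsmul0l m x)). Qed.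
Lemma rsmul_suml m n p I (r : seq I) (Pr : pred I) (F : I -> 'M[V]_(m, n)) (b : 'M[C]_(n, p)) :
  rsmul (\sum_(i <- r | Pr i) F i) b = \sum_(i <- r | Pr i) rsmul (F i) b.
Proof. exact: (big_morph (fun a => rsmul a b) (fun a c => rsmulDl a c b) (rsmul0l V m b)). Qed.
Lemma rsmul_sumr m n p I (r : seq I) (Pr : pred I) (F : I -> 'M[C]_(n, p)) (x : 'M[V]_(m, n)) :
  rsmul x (\sum_(i <- r | Pr i) F i) = \sum_(i <- r | Pr i) rsmul x (F i).
Proof. exact: (big_morph (fun b => rsmul x b) (fun a c => rsmulDr x a c) (rsmul0r p x)). Qed.

Variable NV : forall n, 'M[V]_n -> R.
Hypothesis HV : is_operator_space NV.

Lemma os_bound n (A B : 'M[C]_n) (x : 'M[V]_n) :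
  NV (rsmul (lsmul A x) B) <= Kmx A * NV x * Kmx B.
Proof.
rewrite {1}(matrix_sum_delta A) lsmul_suml rsmul_suml /Kmx -!mulrA mulr_suml.
apply: (le_trans (NV_sum HV _ _ _)); apply: ler_sum => i _.
rewrite lsmul_suml rsmul_suml mulr_suml.
apply: (le_trans (NV_sum HV _ _ _)); apply: ler_sum => j _.
rewrite lsmulZl rsmulZl (NVZ HV) ler_wpM2l ?cabs_ge0 //.
rewrite {1}(matrix_sum_delta B) rsmul_sumr !mulr_sumr.
apply: (le_trans (NV_sum HV _ _ _)); apply: ler_sum => k _.
rewrite rsmul_sumr mulr_sumr.
apply: (le_trans (NV_sum HV _ _ _)); apply: ler_sum => l _.
rewrite rsmulZr (NVZ HV) mulrC ler_wpM2r ?cabs_ge0 //.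
have := NV_ab HV x (opbound_delta i j) (opbound_delta k l).
by rewrite mul1r mulr1.
Qed.

Lemma opbound_Eu n m : opbound (block_mx 1%:M 0 0 0 : 'M[C]_(n + m)) 1.
Proof.
split => // v; rewrite expr1n mul1r -(vsubmxK v) mul_block_col !mul1mx !mul0mx !addr0.
rewrite /vnorm2 !big_split_ord /=.
under eq_bigr => k _ do rewrite col_mxEu.
under [X in _ + X <= _]eq_bigr => k _ do rewrite col_mxEd mxE /=.
under [X in _ <= X + _]eq_bigr => k _ do rewrite col_mxEu.
rewrite [X in _ + X <= _]big1 ?addr0 ?lerDl; last by move=> k _; rewrite expr0n /= addr0.
by apply: sumr_ge0 => k _; rewrite addr_ge0 // sqr_ge0.
Qed.
Lemma opbound_Ed n m : opbound (block_mx 0 0 0 1%:M : 'M[C]_(n + m)) 1.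
Proof.
split => // v; rewrite expr1n mul1r -(vsubmxK v) mul_block_col !mul1mx !mul0mx !add0r.
rewrite /vnorm2 !big_split_ord /=.
under eq_bigr => k _ do rewrite col_mxEu mxE /=.
under [X in _ + X <= _]eq_bigr => k _ do rewrite col_mxEd.
under [X in _ <= _ + X]eq_bigr => k _ do rewrite col_mxEd.
rewrite [X in X + _ <= _]big1 ?add0r ?lerDr; last by move=> k _; rewrite expr0n /= addr0.
by apply: sumr_ge0 => k _; rewrite addr_ge0 // sqr_ge0.
Qed.

Lemma NV_ul n m (w : 'M[V]_(n + m)) : NV (ulsubmx w) <= NV w.
Proof.
have := NV_ab HV w (opbound_Eu n m) (opbound_Eu n m).
rewrite mul1r mulr1 -{1}(submxK w) lsmul_block !lsmul1 !lsmul0l !addr0.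
rewrite rsmul_block !rsmul1 !rsmul0r ?rsmul0l !addr0.
by rewrite -/(dsum _ _) (NV_dsum0 HV).
Qed.

Lemma NV_dr n m (w : 'M[V]_(n + m)) : NV (drsubmx w) <= NV w.
Proof.
have := NV_ab HV w (opbound_Ed n m) (opbound_Ed n m).
rewrite mul1r mulr1 -{1}(submxK w) lsmul_block !lsmul1 !lsmul0l !add0r.
rewrite rsmul_block !rsmul1 !rsmul0r ?rsmul0l !add0r.
by rewrite -/(dsum _ _) (NV_dsum0l HV).
Qed.

Lemma NV_rect n m (a : 'M[C]_(n, m)) : exists K, 0 <= K /\
  forall x : 'M[V]_n, NV (rsmul (lsmul (adjmx a) x) a) <= K * NV x.
Proof.
pose A : 'M[C]_(n + m) := block_mx 0 0 (adjmx a) 0.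
pose B : 'M[C]_(n + m) := block_mx 0 a 0 0.
exists (Kmx A * Kmx B); split; first by rewrite mulr_ge0 ?Kmx_ge0.
move=> x; have := os_bound A B (dsum x 0).
rewrite /A /B /dsum lsmul_block !lsmul0l !lsmul0r !addr0.
rewrite rsmul_block !rsmul0r ?rsmul0l !addr0 ?add0r.
rewrite -/(dsum _ _) -/(dsum _ _) (NV_dsum0l HV) (NV_dsum0 HV).
by rewrite mulrAC.
Qed.
End Bound.

Section QT.
Variable R : realType.
Variables (X Y : lmodType R[i]) (phi : {linear X -> Y}).
Definition imS : pred Y := fun y => `[< exists x, phi x = y >].
Record Qt := QSub { qval : Y; qP : qval \in imS }.
HB.instance Definition _ := [isSub for qval].
HB.instance Definition _ := [Choice of Qt by <:].
Lemma imS_closed : GRing.subsemimod_closed imS.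
Proof.
split; first split.
- by apply/asboolP; exists 0; rewrite linear0.
- move=> u v /asboolP[x <-] /asboolP[y <-]; apply/asboolP; exists (x + y); by rewrite linearD.
- move=> a u /asboolP[x <-]; apply/asboolP; exists (a *: x); by rewrite linearZ.
Qed.
HB.instance Definition _ := GRing.SubChoice_isSubLmodule.Build _ _ _ Qt imS_closed.

Lemma imS_phi x : phi x \in imS. Proof. by apply/asboolP; exists x. Qed.
Definition qfun (x : X) : Qt := QSub (imS_phi x).
Lemma qfun_lin : linear qfun.
Proof.
move=> a u v; apply: val_inj => /=.
by rewrite linearP.
Qed.
HB.instance Definition _ := GRing.isLinear.Build _ _ _ _ qfun qfun_lin.
Definition qlin : {linear X -> Qt} := qfun.
Lemma qlinE x : qval (qlin x) = phi x. Proof. by []. Qed.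
Lemma qlin_surj (y : Qt) : exists x, qlin x = y.
Proof.
case: y => y hy; have := hy; move=> /asboolP [x hx]; exists x.
by apply: val_inj => /=.
Qed.
End QT.

Section Gen.
Variables (R : realType) (V : lmodType R[i]).
Variable NV : forall n, 'M[V]_n -> R.
Hypothesis HV : is_operator_space NV.

Lemma nclosure_closed n (S : set 'M[V]_n) : nclosure (@NV n) (nclosure (@NV n) S) `<=` nclosure (@NV n) S.
Proof.
move=> x hx e e0.
have e2 : 0 < e / 2 by rewrite divr_gt0.
have [y hy h1] := hx _ e2; have [z hz h2] := hy _ e2.
exists z => //; have -> : x - z = (x - y) + (y - z) by rewrite addrA subrK.
apply: (le_lt_trans (NVD HV _ _)).
have : e / 2 + e / 2 = e by rewrite -splitr.
lra.
Qed.

Variable s : V -> V.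
Hypothesis Hs : is_cci_involution NV s.
Lemma gstarD x y : s (x + y) = s x + s y. Proof. by case: Hs. Qed.
Lemma gstar0 : s 0 = 0.
Proof.
have h := gstarD 0 0; rewrite addr0 in h.
by have := congr1 (fun z => z - s 0) h; rewrite subrr addrK => <-.
Qed.
Lemma gstarN x : s (- x) = - s x.
Proof. by apply/eqP; rewrite -subr_eq0 opprK -gstarD addNr gstar0. Qed.
Lemma gmxstarD n (x y : 'M[V]_n) : mxstar s (x + y) = mxstar s x + mxstar s y.
Proof. by apply/matrixP => i j; rewrite !mxE gstarD. Qed.
Lemma gmxstarN n (x : 'M[V]_n) : mxstar s (- x) = - mxstar s x.
Proof. by apply/matrixP => i j; rewrite !mxE gstarN. Qed.
End Gen.

Section Quot.
Variable R : realType.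
Local Notation C := R[i].
Variables (X : lmodType C) (N : forall n, 'M[X]_n -> R) (star : X -> X)
  (P : forall n, set 'M[X]_n).
Hypothesis HX : is_moos N star P.
Variables (Y : lmodType C) (NY : forall n, 'M[Y]_n -> R) (starY : Y -> Y)
  (PY : forall n, set 'M[Y]_n) (phi : {linear X -> Y}).
Hypothesis HY : is_moos NY starY PY.
Hypothesis Hstar : forall x, phi (star x) = starY (phi x).
Hypothesis Hcc : forall n (x : 'M[X]_n), NY (map_mx phi x) <= N x.
Hypothesis Hcp : forall n (x : 'M[X]_n), P x -> PY (map_mx phi x).

Let HXo : is_operator_space N. Proof. by case: HX. Qed.
Let HYo : is_operator_space NY. Proof. by case: HY. Qed.

Definition Jset : set X := [set x | phi x = 0].
Local Notation J := Jset.

Lemma J0 : J 0. Proof. by rewrite /J /= linear0. Qed.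
Lemma JD x y : J x -> J y -> J (x + y).
Proof. by rewrite /J /= linearD => -> ->; rewrite addr0. Qed.
Lemma JN x : J x -> J (- x).
Proof. by rewrite /J /= linearN => ->; rewrite oppr0. Qed.
Lemma JZ c x : J x -> J (c *: x).
Proof. by rewrite /J /= linearZ => ->; exact: scaler0. Qed.
Lemma Jsum I (r : seq I) (Pr : pred I) (F : I -> X) :
  (forall i, Pr i -> J (F i)) -> J (\sum_(i <- r | Pr i) F i).
Proof. by move=> h; apply: big_ind => //; [exact: J0 | exact: JD]. Qed.

Lemma starY0 : starY 0 = 0.
Proof.
case: HY => _ [_ hD _ _] _.
have h := hD 0 0; rewrite addr0 in h.
by have := congr1 (fun z => z - starY 0) h; rewrite subrr addrK => <-.
Qed.
Lemma Jstar x : J x -> J (star x).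
Proof. by rewrite /J /= Hstar => ->; exact: starY0. Qed.

Lemma mxinP n (x : 'M[X]_n) : mxin J n x <-> map_mx phi x = 0.
Proof.
split => [h|h]; first by apply/matrixP => i j; rewrite !mxE; exact: h.
by move=> i j; have := congr1 (fun M : 'M[Y]_n => M i j) h; rewrite !mxE.
Qed.

Lemma mxin0 n : mxin J n 0. Proof. by rewrite /mxin /= => i j; rewrite mxE; exact: J0. Qed.
Lemma mxinD n (x y : 'M[X]_n) : mxin J n x -> mxin J n y -> mxin J n (x + y).
Proof. by move=> hx hy; rewrite /mxin /= in hx hy * => i j; rewrite mxE; apply: JD; [exact: hx | exact: hy]. Qed.
Lemma mxinN n (x : 'M[X]_n) : mxin J n x -> mxin J n (- x).
Proof. by move=> hx; rewrite /mxin /= in hx * => i j; rewrite mxE; apply: JN; exact: hx. Qed.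
Lemma mxinB n (x y : 'M[X]_n) : mxin J n x -> mxin J n y -> mxin J n (x - y).
Proof. by move=> hx hy; apply: mxinD => //; exact: mxinN. Qed.
Lemma mxinZ n c (x : 'M[X]_n) : mxin J n x -> mxin J n (map_mx ( *:%R c) x).
Proof. by move=> hx; rewrite /mxin /= in hx * => i j; rewrite mxE; apply: JZ; exact: hx. Qed.
Lemma mxin_ab m n (a : 'M[C]_(m, n)) (b : 'M[C]_(n, m)) (x : 'M[X]_n) :
  mxin J n x -> mxin J m (rsmul (lsmul a x) b).
Proof.
move=> hx; rewrite /mxin /= in hx * => i j; rewrite mxE; apply: Jsum => k _; apply: JZ.
by rewrite mxE; apply: Jsum => l _; apply: JZ.
Qed.
Lemma mxin_star n (x : 'M[X]_n) : mxin J n x -> mxin J n (mxstar star x).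
Proof. by move=> hx; rewrite /mxin /= in hx * => i j; rewrite mxE; apply: Jstar; exact: hx. Qed.
Lemma mxin_ul n m (x : 'M[X]_(n + m)) : mxin J _ x -> mxin J n (ulsubmx x).
Proof. by move=> hx; rewrite /mxin /= in hx * => i j; rewrite !mxE; exact: hx. Qed.
Lemma mxin_dr n m (x : 'M[X]_(n + m)) : mxin J _ x -> mxin J m (drsubmx x).
Proof. by move=> hx; rewrite /mxin /= in hx * => i j; rewrite !mxE; exact: hx. Qed.
Lemma mxin_dsum n m (x : 'M[X]_n) (y : 'M[X]_m) :
  mxin J n x -> mxin J m y -> mxin J _ (dsum x y).
Proof.
move=> hx hy; rewrite /mxin /= in hx hy * => i j; rewrite -(@splitK _ _ i) -(@splitK _ _ j).
case: (fintype.split i) => k; case: (fintype.split j) => l;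
rewrite /dsum /= ?block_mxEul ?block_mxEur ?block_mxEdl ?block_mxEdr ?mxE //; exact: J0.
Qed.

Definition qn n (x : 'M[X]_n) : R := inf [set N (x + j) | j in mxin J n].

Lemma qset_ne n (x : 'M[X]_n) : [set N (x + j) | j in mxin J n] !=set0.
Proof. by exists (N (x + 0)), 0 => //; exact: mxin0. Qed.
Lemma qset_lb n (x : 'M[X]_n) : has_lbound [set N (x + j) | j in mxin J n].
Proof. by exists 0 => _ [j _ <-]; exact: NV_ge0. Qed.

Lemma qn_le n (x j : 'M[X]_n) : mxin J n j -> qn x <= N (x + j).
Proof. by move=> hj; apply: (ge_inf (qset_lb x)); exists j. Qed.
Lemma qn_ge0 n (x : 'M[X]_n) : 0 <= qn x.
Proof. by apply: lb_le_inf; [exact: qset_ne | move=> _ [j _ <-]; exact: NV_ge0]. Qed.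
Lemma qn_leN n (x : 'M[X]_n) : qn x <= N x.
Proof. by have := qn_le x (@mxin0 n); rewrite addr0. Qed.
Lemma qn_approx n (x : 'M[X]_n) e : 0 < e -> exists2 j, mxin J n j & N (x + j) < qn x + e.
Proof.
move=> e0; have := @inf_lt _ _ (qn x + e) (qset_ne x).
by rewrite ltrDl e0 => /(_ isT) [_ [j hj <-] h]; exists j.
Qed.
Lemma qn_le_mul n m (x : 'M[X]_n) (y : 'M[X]_m) c : 0 <= c ->
  (forall k, mxin J n k -> exists2 k', mxin J m k' & N (y + k') <= c * N (x + k)) ->
  qn y <= c * qn x.
Proof.
move=> c0 h; apply/ler_addgt0Pr => e e0.
have c1 : 0 < c + 1 by lra.
have e1 : 0 < e / (c + 1) by rewrite divr_gt0.
have [k hk hlt] := qn_approx x e1.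
have [k' hk' hle] := h k hk.
apply: (le_trans (qn_le y hk')); apply: (le_trans hle).
have ht : e / (c + 1) * (c + 1) = e by rewrite divfK // gt_eqF.
move: hlt e1 ht; move: (e / (c + 1)) => t.
move: (N (x + k)) (qn x) => a b hab t0 ht; nra.
Qed.

Lemma qnD n (x y : 'M[X]_n) : qn (x + y) <= qn x + qn y.
Proof.
apply/ler_addgt0Pr => e e0.
have e2 : 0 < e / 2 by rewrite divr_gt0.
have [j hj h1] := qn_approx x e2.
have [k hk h2] := qn_approx y e2.
apply: (le_trans (qn_le (x + y) (mxinD hj hk))).
rewrite addrACA; apply: (le_trans (NVD HXo _ _)).
have : e / 2 + e / 2 = e by rewrite -splitr.
lra.
Qed.

Lemma qnJ n (x j : 'M[X]_n) : mxin J n j -> qn (x + j) = qn x.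
Proof.
move=> hj; apply/eqP; rewrite eq_le; apply/andP; split.
  rewrite -[qn x]mul1r; apply: qn_le_mul => // k hk.
  by exists (k - j); [exact: mxinB | rewrite mul1r -addrA [j + _]addrC addrNK].
rewrite -[qn (x + j)]mul1r; apply: qn_le_mul => // k hk.
by exists (j + k); [exact: mxinD | rewrite mul1r addrA].
Qed.

Lemma qn0 n : qn (0 : 'M[X]_n) = 0.
Proof.
apply/eqP; rewrite eq_le qn_ge0 andbT.
by apply: (le_trans (qn_leN _)); rewrite (NV0 HXo).
Qed.

Lemma qnZ n c (x : 'M[X]_n) : qn (map_mx ( *:%R c) x) = cabs c * qn x.
Proof.
have le1 : forall d (z : 'M[X]_n), qn (map_mx ( *:%R d) z) <= cabs d * qn z.
  move=> d z; apply: qn_le_mul; first exact: cabs_ge0.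
  move=> k hk; exists (map_mx ( *:%R d) k); first exact: mxinZ.
  have -> : map_mx ( *:%R d) z + map_mx ( *:%R d) k = map_mx ( *:%R d) (z + k).
    by apply/matrixP => i j; rewrite !mxE scalerDr.
  by rewrite (NVZ HXo).
apply/eqP; rewrite eq_le le1 /=.
have [->|c0] := eqVneq c 0.
  by rewrite cabs0 mul0r qn_ge0.
have := le1 c^-1 (map_mx ( *:%R c) x).
have -> : map_mx ( *:%R c^-1) (map_mx ( *:%R c) x) = x.
  by apply/matrixP => i j; rewrite !mxE scalerA mulVf // scale1r.
rewrite cabsV => h.
have cp : 0 < cabs c.
  rewrite lt_neqAle cabs_ge0 andbT eq_sym; apply: contra c0.
  by rewrite cabsE => /eqP /Normc.eq0_normc ->.
have ci : 0 < (cabs c)^-1 by rewrite invr_gt0.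
by rewrite -(ler_pM2l ci) mulrA mulVf ?gt_eqF // mul1r.
Qed.
Lemma qn_ab n (a b : 'M[C]_n) (x : 'M[X]_n) ca cb :
  opbound a ca -> opbound b cb -> qn (rsmul (lsmul a x) b) <= ca * qn x * cb.
Proof.
move=> ha hb; have ca0 : 0 <= ca by case: ha.
have cb0 : 0 <= cb by case: hb.
rewrite mulrAC; apply: qn_le_mul; first exact: mulr_ge0.
move=> k hk; exists (rsmul (lsmul a k) b); first exact: mxin_ab.
rewrite -rsmulDl -lsmulDr; apply: (le_trans (NV_ab HXo _ ha hb)).
by rewrite mulrAC.
Qed.

Lemma qn_rect n m (a : 'M[C]_(n, m)) : exists K, 0 <= K /\
  forall x : 'M[X]_n, qn (rsmul (lsmul (adjmx a) x) a) <= K * qn x.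
Proof.
have [K [K0 hK]] := NV_rect HXo a.
exists K; split => // x; apply: qn_le_mul => // k hk.
exists (rsmul (lsmul (adjmx a) k) a); first exact: mxin_ab.
by rewrite -rsmulDl -lsmulDr.
Qed.

Let HXi : is_cci_involution N star. Proof. by case: HX. Qed.
Lemma starK x : star (star x) = x. Proof. by case: HXi. Qed.
Lemma starD x y : star (x + y) = star x + star y. Proof. by case: HXi. Qed.
Lemma starZ c x : star (c *: x) = conjc c *: star x. Proof. by case: HXi. Qed.
Lemma NV_star n (x : 'M[X]_n) : N (mxstar star x) = N x. Proof. by case: HXi. Qed.
Lemma star0 : star 0 = 0.
Proof.
have h := starD 0 0; rewrite addr0 in h.
by have := congr1 (fun z => z - star 0) h; rewrite subrr addrK => <-.
Qed.
Lemma starN x : star (- x) = - star x.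
Proof. by apply/eqP; rewrite -subr_eq0 opprK -starD addNr star0. Qed.

Lemma mxstarD n (x y : 'M[X]_n) : mxstar star (x + y) = mxstar star x + mxstar star y.
Proof. by apply/matrixP => i j; rewrite !mxE starD. Qed.
Lemma mxstarN n (x : 'M[X]_n) : mxstar star (- x) = - mxstar star x.
Proof. by apply/matrixP => i j; rewrite !mxE starN. Qed.
Lemma mxstarK n (x : 'M[X]_n) : mxstar star (mxstar star x) = x.
Proof. by apply/matrixP => i j; rewrite !mxE starK. Qed.

Lemma qn_star n (x : 'M[X]_n) : qn (mxstar star x) = qn x.
Proof.
have le1 : forall z : 'M[X]_n, qn (mxstar star z) <= qn z.
  move=> z; rewrite -[qn z]mul1r; apply: qn_le_mul => // k hk.
  by exists (mxstar star k); [exact: mxin_star | rewrite -mxstarD NV_star mul1r].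
apply/eqP; rewrite eq_le le1 /=.
by rewrite -{1}(mxstarK x) le1.
Qed.

Lemma qn_dsum n m (x : 'M[X]_n) (y : 'M[X]_m) :
  qn (dsum x y) = Num.max (qn x) (qn y).
Proof.
apply/eqP; rewrite eq_le; apply/andP; split.
  apply/ler_addgt0Pr => e e0.
  have [j hj h1] := qn_approx x e0.
  have [k hk h2] := qn_approx y e0.
  apply: (le_trans (qn_le (dsum x y) (mxin_dsum hj hk))).
  have -> : dsum x y + dsum j k = dsum (x + j) (y + k).
    by rewrite /dsum add_block_mx !addr0.
  rewrite (NV_dsum HXo) ge_max; apply/andP; split.
    by apply: (le_trans (ltW h1)); rewrite lerD2r le_max lexx.
  by apply: (le_trans (ltW h2)); rewrite lerD2r le_max lexx orbT.
apply: lb_le_inf; first exact: qset_ne.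
move=> _ [j hj <-]; rewrite ge_max; apply/andP; split.
  apply: (le_trans _ (NV_ul HXo (dsum x y + j))).
  have -> : ulsubmx (dsum x y + j) = x + ulsubmx j.
    by rewrite -{1}[j]submxK /dsum add_block_mx block_mxKul.
  exact: qn_le (mxin_ul hj).
apply: (le_trans _ (NV_dr HXo (dsum x y + j))).
have -> : drsubmx (dsum x y + j) = y + drsubmx j.
  by rewrite -{1}[j]submxK /dsum add_block_mx block_mxKdr.
exact: qn_le (mxin_dr hj).
Qed.

Lemma NY_qn n (x : 'M[X]_n) : NY (map_mx phi x) <= qn x.
Proof.
apply: lb_le_inf; first exact: qset_ne.
move=> _ [j hj <-]; apply: le_trans (Hcc _).
by rewrite map_mxD (proj1 (mxinP j) hj) addr0.
Qed.

Lemma qn_eq0 n (x : 'M[X]_n) : qn x = 0 -> mxin J n x.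
Proof.
move=> h; apply/mxinP; apply: (NV_eq0 HYo); apply/eqP.
by rewrite eq_le NV_ge0 // andbT -h NY_qn.
Qed.
Local Notation Q := (Qt phi).
Local Notation q := (qlin phi).

Lemma q_eq0 x : q x = 0 <-> J x.
Proof.
split => [h|h]; first by have := congr1 (@qval _ _ _ phi) h; rewrite qlinE.
by apply: val_inj; rewrite /= h.
Qed.

Lemma mxq_eq0 n (x : 'M[X]_n) : map_mx q x = 0 <-> mxin J n x.
Proof.
split => [h|h].
  rewrite /mxin /= => i j; apply/q_eq0.
  by have := congr1 (fun M : 'M[Q]_n => M i j) h; rewrite !mxE.
by apply/matrixP => i j; rewrite !mxE; apply/q_eq0; exact: h.
Qed.

Lemma mxq_surj n (y : 'M[Q]_n) : exists x, map_mx q x = y.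
Proof.
exists (\matrix_(i, j) proj1_sig (cid (qlin_surj (y i j)))).
by apply/matrixP => i j; rewrite !mxE; exact: (proj2_sig (cid (qlin_surj (y i j)))).
Qed.

Definition NQ n (y : 'M[Q]_n) : R := inf [set N x | x in [set x | map_mx q x = y]].

Lemma NQ_q n (x : 'M[X]_n) : NQ (map_mx q x) = qn x.
Proof.
rewrite /NQ /qn; congr inf; apply/seteqP; split.
  move=> _ [x' hx' <-]; exists (x' - x); last by rewrite addrC subrK.
  by apply/mxq_eq0; rewrite map_mxB hx' subrr.
move=> _ [j hj <-]; exists (x + j) => //.
by rewrite /= map_mxD (proj2 (mxq_eq0 j) hj) addr0.
Qed.

Lemma imS_star y : y \in imS phi -> starY y \in imS phi.
Proof. by move=> /asboolP [x <-]; apply/asboolP; exists (star x). Qed.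
Definition starQ (y : Q) : Q := QSub (imS_star (qP y)).
Lemma starQ_q x : starQ (q x) = q (star x).
Proof. by apply: val_inj => /=; rewrite Hstar. Qed.

Definition PQ n : set 'M[Q]_n := nclosure (@NQ n) [set map_mx q x | x in @P n].

Lemma map_q_scale n c (x : 'M[X]_n) :
  map_mx ( *:%R c) (map_mx q x) = map_mx q (map_mx ( *:%R c) x).
Proof. by apply/matrixP => i j; rewrite !mxE linearZ. Qed.

Lemma map_q_dsum n m (x : 'M[X]_n) (y : 'M[X]_m) :
  map_mx q (dsum x y) = dsum (map_mx q x) (map_mx q y).
Proof. by rewrite /dsum map_block_mx !map_mx0. Qed.

Lemma map_q_star n (x : 'M[X]_n) : mxstar starQ (map_mx q x) = map_mx q (mxstar star x).
Proof. by apply/matrixP => i j; rewrite !mxE starQ_q. Qed.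

Lemma HQo : is_operator_space NQ.
Proof.
split.
- move=> n y1 y2; have [x1 <-] := mxq_surj y1; have [x2 <-] := mxq_surj y2.
  by rewrite -map_mxD !NQ_q qnD.
- move=> n l y; have [x <-] := mxq_surj y.
  by rewrite map_q_scale !NQ_q qnZ.
- move=> n y; have [x <-] := mxq_surj y.
  by rewrite NQ_q => /qn_eq0 /mxq_eq0.
- move=> n m y1 y2; have [x1 <-] := mxq_surj y1; have [x2 <-] := mxq_surj y2.
  by rewrite -map_q_dsum !NQ_q qn_dsum.
- move=> n a b y ca cb ha hb; have [x <-] := mxq_surj y.
  by rewrite -map_lsmul -map_rsmul !NQ_q qn_ab.
Qed.

Lemma HQi : is_cci_involution NQ starQ.
Proof.
split.
- by move=> y; have [x <-] := qlin_surj y; rewrite !starQ_q starK.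
- move=> y1 y2; have [x1 <-] := qlin_surj y1; have [x2 <-] := qlin_surj y2.
  by rewrite -linearD !starQ_q starD linearD.
- move=> l y; have [x <-] := qlin_surj y.
  by rewrite -linearZ !starQ_q starZ linearZ.
- move=> n y; have [x <-] := mxq_surj y.
  by rewrite map_q_star !NQ_q qn_star.
Qed.

Lemma PQ_PY n (x : 'M[X]_n) : PQ (map_mx q x) -> PY (map_mx phi x).
Proof.
move=> hx; case: HY => _ _ [_ hcl _ _ _]; apply: hcl => e e0.
have [_ [p hp <-] h] := hx e e0.
exists (map_mx phi p); first exact: Hcp.
rewrite -map_mxB; apply: (le_lt_trans (NY_qn _)).
by rewrite -NQ_q map_mxB.
Qed.

Lemma HQm : is_matrix_ordering NQ starQ PQ.
Proof.
split.
- move=> n y hy; apply/eqP; rewrite -subr_eq0; apply/eqP; apply: (NV_eq0 HQo).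
  apply/eqP; rewrite eq_le (NV_ge0 HQo) andbT.
  apply/ler_addgt0Pr => e e0; rewrite add0r.
  have e2 : 0 < e / 2 by rewrite divr_gt0.
  have [_ [p hp <-] h] := hy _ e2.
  have hsp : mxstar star p = p by case: HX => _ _ [H _ _ _ _]; exact: H.
  have -> : mxstar starQ y - y =
      mxstar starQ (y - map_mx q p) - (y - map_mx q p).
    rewrite (gmxstarD HQi) (gmxstarN HQi) map_q_star hsp.
    by rewrite opprB addrA addrNK.
  apply: (le_trans (NVD HQo _ _)).
  rewrite (NVN HQo).
  have -> : NQ (mxstar starQ (y - map_mx q p)) = NQ (y - map_mx q p) by case: HQi.
  have : e / 2 + e / 2 = e by rewrite -splitr.
  move: h; move: (NQ (y - map_mx q p)) => t; lra.
- move=> n; exact: (nclosure_closed HQo).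
- move=> n m a y hy; have [x hx] := mxq_surj y; subst y.
  have [K [K0 hK]] := qn_rect a.
  move=> e e0.
  have eK : 0 < e / (K + 1) by rewrite divr_gt0 //; lra.
  have [_ [p hp <-] h] := hy _ eK.
  exists (map_mx q (rsmul (lsmul (adjmx a) p) a)).
    exists (rsmul (lsmul (adjmx a) p) a) => //.
    by case: HX => _ _ [_ _ H _ _]; exact: H.
  rewrite -map_lsmul -map_rsmul -map_mxB NQ_q.
  have -> : rsmul (lsmul (adjmx a) x) a - rsmul (lsmul (adjmx a) p) a =
            rsmul (lsmul (adjmx a) (x - p)) a.
    by rewrite lsmulDr lsmulNr rsmulDl rsmulNl.
  apply: (le_lt_trans (hK _)).
  rewrite -NQ_q map_mxB.
  have ht : e / (K + 1) * (K + 1) = e by rewrite divfK // gt_eqF //; lra.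
  move: h eK ht; move: (e / (K + 1)) (NQ (map_mx q x - map_mx q p)) => t u h t0 ht.
  nra.
- move=> n m y1 y2 h1 h2 e e0.
  have [_ [p1 hp1 <-] g1] := h1 e e0.
  have [_ [p2 hp2 <-] g2] := h2 e e0.
  exists (map_mx q (dsum p1 p2)).
    exists (dsum p1 p2) => //.
    by case: HX => _ _ [_ _ _ H _]; exact: H.
  rewrite map_q_dsum.
  have -> : dsum y1 y2 - dsum (map_mx q p1) (map_mx q p2) =
            dsum (y1 - map_mx q p1) (y2 - map_mx q p2).
    by rewrite /dsum opp_block_mx add_block_mx !oppr0 !addr0.
  by rewrite (NV_dsum HQo) gt_max g1 g2.
- move=> n y h1 h2; have [x hx] := mxq_surj y; subst y.
  have hp1 := PQ_PY h1.
  have hp2 : PY (map_mx phi (- x)) by apply: PQ_PY; rewrite map_mxN.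
  have : map_mx phi x = 0.
    case: HY => _ _ [_ _ _ _ H]; apply: H => //.
    by rewrite -map_mxN.
  by move/mxinP/mxq_eq0.
Qed.

Lemma HQ : is_moos NQ starQ PQ.
Proof. by split; [exact: HQo | exact: HQi | exact: HQm]. Qed.
End Quot.

Theorem proposition3p4 (R : realType) (X : lmodType R[i])
    (N : forall n, 'M[X]_n -> R) (star : X -> X) (P : forall n, set 'M[X]_n)
    (J : set X) :
  is_moos N star P -> is_kernel N star P J ->
  exists (Q : lmodType R[i]) (q : {linear X -> Q})
         (NQ : forall n, 'M[Q]_n -> R) (starQ : Q -> Q) (PQ : forall n, set 'M[Q]_n),
    [/\ (forall y : Q, exists x : X, q x = y) /\
        (forall x : X, q x = 0 <-> J x),
        (forall n (x : 'M[X]_n),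
            NQ n (map_mx q x) = inf [set N n (x + j) | j in mxin J n]),
        (forall x : X, starQ (q x) = q (star x)),
        (forall n, PQ n = nclosure (NQ n) [set map_mx q x | x in P n]) &
        is_moos NQ starQ PQ].
Proof.
move=> HX [Y [NY [starY [PY [phi [HY Hs Hcc Hcp HJ]]]]]]; subst J.
exists (Qt phi), (qlin phi), (NQ N (phi:=phi)), (starQ (star:=star) (starY:=starY) (phi:=phi) Hs), (PQ N P (phi:=phi)).
split.
- split; first exact: qlin_surj.
  by move=> x; exact: (q_eq0 phi x).
- move=> n x; exact: NQ_q.
- move=> x; exact: starQ_q.
- move=> n; reflexivity.
- exact: (HQ HX HY Hs Hcc Hcp).
Qed.
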